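(* Let $R$ be a commutative ring, $\mathcal{M}$ a nonempty set, $X$ a set, $A(X)$ the free $\mathcal{M}$-algebra over $R$ on $X$, and $F=\bigoplus_{x\in X}Rx\subset A(X)$. (i) There is a natural isomorphism of $R$-group functors $\mathbf{GL}_R(F)\simeq\mathbf{Aut}(A(X),F)$. (ii) Let $A$ be an $\mathcal{M}$-algebra over $R$ containing a copy of $F$ as an $R$-submodule which generates $A$ as an $\mathcal{M}$-algebra, and assume that the canonical map $F\otimes_R S\to A\otimes_R S$ is injective for all commutative $R$-algebras $S$ (e.g. if $F$ is locally a direct summand of $A$). Then the construction $\theta\mapsto\widetilde{\theta|_{F}}$ (applied over each $S$, where $\widetilde{\theta|_F}$ is the unique $\mathcal{M}$-algebra endomorphism of $A(X)\otimes_R S$ extending $\theta$ on $X$) yields an injective morphism of $R$-group functors $\mathbf{Aut}(A,F)\to\mathbf{Aut}(A(X),F)\simeq\mathbf{GL}_R(F)$.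
   Context: An $\mathcal{M}$-algebra over $R$ is an $R$-module with $R$-bilinear products $(a,b)\mapsto a_m b$, $m\in\mathcal{M}$; homomorphisms preserve all $m$-products. The free $\mathcal{M}$-magma $M(X)$: $M^1(X)=X$, $M^k(X)=\coprod_{1\le j<k,\ m\in\mathcal{M}}M^j(X)\times\{m\}\times M^{k-j}(X)$, $M(X)=\coprod_k M^k(X)$, $a_mb=(a,m,b)$; $A(X)$ is the free $R$-module on $M(X)$ with bilinearly extended products, universal for set maps from $X$ into $\mathcal{M}$-algebras. For an $R$-module $F$, $\mathbf{GL}_R(F)(S)=\operatorname{GL}_S(F\otimes_R S)$. For an $\mathcal{M}$-algebra $B$ with submodule $F$, $\mathbf{Aut}(B,F)(S)$ is the group of $\mathcal{M}$-algebra automorphisms of $B\otimes_R S$ over $S$ that preserve the image of $F\otimes_RS$, functorial in $S$ via base change. *)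

(* Defs.v *)
From HB Require Import structures.
From mathcomp Require Import all_boot all_order all_algebra.
Set Implicit Arguments. Unset Strict Implicit. Unset Printing Implicit Defensive.
Import GRing.Theory.
Local Open Scope ring_scope.

(* ---------- The free M-magma M(X) (binary trees, = the graded coproduct) *)
Inductive magma (X M : Type) : Type :=
  | Leaf of X
  | Node of magma X M & M & magma X M.
Arguments Leaf {X M}.
Arguments Node {X M}.

(* ---------- Formal S-linear combinations  sum_i s_i [t_i]  (representatives) *)
Definition fsum (S T : Type) := seq (S * T).

Section Formal.
Variable S : comPzRingType.

Definition fgen (T : Type) (t : T) : fsum S T := [:: (1, t)].
Definition fadd (T : Type) (u v : fsum S T) : fsum S T := u ++ v.
Definition fscale (T : Type) (s : S) (u : fsum S T) : fsum S T :=
  [seq (s * p.1, p.2) | p <- u].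
Definition fmapT (T T' : Type) (g : T -> T') (u : fsum S T) : fsum S T' :=
  [seq (p.1, g p.2) | p <- u].
Definition fprod (T M : Type) (mulT : M -> T -> T -> T) (m : M)
    (u v : fsum S T) : fsum S T :=
  [seq (p.1 * q.1, mulT m p.2 q.2) | p <- u, q <- v].

Definition fev (T : Type) (W : lmodType S) (g : T -> W) (u : fsum S T) : W :=
  \sum_(p <- u) p.1 *: g p.2.

(* equality in the free S-module on T *)
Definition feq (T : Type) (u v : fsum S T) : Prop :=
  forall (W : lmodType S) (g : T -> W), fev g u = fev g v.

(* equality in B (x)_R S, S an R-algebra via iS : defined by the universal
   property of the tensor product (kernel of fsum S B -> B (x)_R S) *)
Definition teq (R : comPzRingType) (iS : {rmorphism R -> S}) (B : lmodType R)
    (u v : fsum S B) : Prop :=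
  forall (W : lmodType S) (f : B -> W),
    (forall (r : R) (a b : B), f (r *: a + b) = iS r *: f a + f b) ->
    fev f u = fev f v.

Section Maps.
Variables (T : Type) (E : fsum S T -> fsum S T -> Prop).

Definition is_lin (phi : fsum S T -> fsum S T) : Prop :=
  (forall u v, E u v -> E (phi u) (phi v)) /\
  (forall (s : S) u v, E (phi (fadd (fscale s u) v)) (fadd (fscale s (phi u)) (phi v))).

Definition meq (phi psi : fsum S T -> fsum S T) : Prop := forall u, E (phi u) (psi u).

Definition is_auto (phi : fsum S T -> fsum S T) : Prop :=
  is_lin phi /\ exists psi, is_lin psi /\
    meq (phi \o psi) id /\ meq (psi \o phi) id.

Variables (M : Type) (mulT : M -> T -> T -> T).

Definition is_Mhom (phi : fsum S T -> fsum S T) : Prop :=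
  forall m u v, E (phi (fprod mulT m u v)) (fprod mulT m (phi u) (phi v)).

Definition is_auto_pres (inS : fsum S T -> Prop) (phi : fsum S T -> fsum S T) : Prop :=
  is_lin phi /\ is_Mhom phi /\ (forall u, inS u -> inS (phi u)) /\
  exists psi, is_lin psi /\ is_Mhom psi /\ (forall u, inS u -> inS (psi u)) /\
    meq (phi \o psi) id /\ meq (psi \o phi) id.
End Maps.
End Formal.

Definition bc (S S' : comPzRingType) (h : S -> S') (T : Type)
    (phi : fsum S T -> fsum S T) (u : fsum S' T) : fsum S' T :=
  flatten [seq fscale p.1 [seq (h q.1, q.2) | q <- phi (fgen S p.2)] | p <- u].

(* GL_R(F)(S), F = free R-module on X, F (x) S = free S-module on X *)
Definition GLF (X : Type) (S : comPzRingType) (phi : fsum S X -> fsum S X) :=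
  is_auto (@feq S X) phi.

(* image of F (x) S in A(X) (x) S = free S-module on M(X) *)
Definition inF_AX (X M : Type) (S : comPzRingType) (u : fsum S (magma X M)) :=
  exists v : fsum S X, feq u (fmapT Leaf v).

Definition AutAX (X M : Type) (S : comPzRingType)
    (phi : fsum S (magma X M) -> fsum S (magma X M)) :=
  is_auto_pres (@feq S (magma X M)) (fun (m : M) (a b : magma X M) => Node a m b) (@inF_AX X M S) phi.

(* image of F (x) S in B (x) S, F embedded via its basis images iF *)
Definition inF_B (R : comPzRingType) (B : lmodType R) (X : Type) (iF : X -> B)
    (S : comPzRingType) (iS : {rmorphism R -> S}) (u : fsum S B) :=
  exists v : fsum S X, @teq S R iS B u (fmapT iF v).

Definition AutB (R : comPzRingType) (B : lmodType R) (M : Type)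
    (mul : M -> B -> B -> B) (X : Type) (iF : X -> B)
    (S : comPzRingType) (iS : {rmorphism R -> S}) (phi : fsum S B -> fsum S B) :=
  is_auto_pres (@teq S R iS B) mul (inF_B iF iS) phi.

Definition Ralg_hom (R S S' : comPzRingType) (iS : {rmorphism R -> S})
    (iS' : {rmorphism R -> S'}) (h : {rmorphism S -> S'}) :=
  forall r, h (iS r) = iS' r.

Definition bilinear_prods (R : comPzRingType) (B : lmodType R) (M : Type)
    (mul : M -> B -> B -> B) :=
  forall m (r : R) (a b c : B),
    mul m (r *: a + b) c = r *: mul m a c + mul m b c /\
    mul m c (r *: a + b) = r *: mul m c a + mul m c b.

Definition generates (R : comPzRingType) (B : lmodType R) (M : Type)
    (mul : M -> B -> B -> B) (X : Type) (iF : X -> B) :=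
  forall P : B -> Prop,
    (forall x, P (iF x)) -> P 0 ->
    (forall (r : R) a b, P a -> P b -> P (r *: a + b)) ->
    (forall m a b, P a -> P b -> P (mul m a b)) ->
    forall a, P a.

(* theta |-> theta|_F ~ : psi is the M-algebra endomorphism of A(X)(x)S
   whose value on each x in X is theta(x) (read in F (x) S) *)
Definition ext_rel (R : comPzRingType) (B : lmodType R) (X M : Type) (iF : X -> B)
    (S : comPzRingType) (iS : {rmorphism R -> S})
    (theta : fsum S B -> fsum S B)
    (psi : fsum S (magma X M) -> fsum S (magma X M)) : Prop :=
  is_lin (@feq S (magma X M)) psi /\ is_Mhom (@feq S (magma X M)) (fun (m : M) (a b : magma X M) => Node a m b) psi /\
  forall x, exists v : fsum S X,
    feq (psi (fgen S (Leaf x))) (fmapT Leaf v) /\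
    @teq S R iS B (theta (fgen S (iF x))) (fmapT iF v).

(* Main.v *)
Require Import Defs.
From HB Require Import structures.
From mathcomp Require Import all_boot all_order all_algebra.
From Stdlib Require Import IndefiniteDescription.
Import GRing.Theory.
Local Open Scope ring_scope.
Set Implicit Arguments. Unset Strict Implicit. Unset Printing Implicit Defensive.

Definition hmod (S S' : comPzRingType) (h : S -> S') (W : lmodType S') : Type := W.
Arguments hmod {S S'} h W.
Section HMod.
Variables (S S' : comPzRingType) (h : {rmorphism S -> S'}) (W : lmodType S').
#[non_forgetful_inheritance]
HB.instance Definition _ := GRing.Zmodule.on (hmod h W).
Definition hscale (s : S) (w : hmod h W) : hmod h W := (h s) *: (w : W).
Lemma hscaleA a b v : hscale a (hscale b v) = hscale (a * b) v.
Proof. by rewrite /hscale scalerA rmorphM. Qed.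
Lemma hscale1 : left_id 1 hscale.
Proof. by move=> v; rewrite /hscale rmorph1 scale1r. Qed.
Lemma hscaleDr : right_distributive hscale +%R.
Proof. by move=> a u v; rewrite /hscale scalerDr. Qed.
Lemma hscaleDl v : {morph hscale^~ v: a b / a + b}.
Proof. by move=> a b; rewrite /hscale rmorphD scalerDl. Qed.
#[non_forgetful_inheritance]
HB.instance Definition _ := GRing.Zmodule_isLmodule.Build S (hmod h W) hscaleA hscale1 hscaleDr hscaleDl.
End HMod.

Definition lin (S : comPzRingType) (T T' : Type) (k : T -> fsum S T') (u : fsum S T) : fsum S T' :=
  flatten [seq fscale p.1 (k p.2) | p <- u].
Definition mapc (S S' : comPzRingType) (h : S -> S') (T : Type) (u : fsum S T) : fsum S' T :=
  [seq (h q.1, q.2) | q <- u].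

Section Fev.
Variable S : comPzRingType.
Implicit Types (W : lmodType S).

Lemma fev_nil T W (g : T -> W) : fev g [::] = 0.
Proof. by rewrite /fev big_nil. Qed.
Lemma fev_cons T W (g : T -> W) p u : fev g (p :: u) = p.1 *: g p.2 + fev g u.
Proof. by rewrite /fev big_cons. Qed.
Lemma fev_cat T W (g : T -> W) u v : fev g (u ++ v) = fev g u + fev g v.
Proof. by rewrite /fev big_cat. Qed.
Lemma fev_scale T W (g : T -> W) s (u : fsum S T) : fev g (fscale s u) = s *: fev g u.
Proof.
elim: u => [|p u IH] /=; first by rewrite /fscale /= !fev_nil scaler0.
by rewrite /fscale /= fev_cons -/(fscale s u) IH fev_cons scalerDr scalerA.
Qed.
Lemma fev_map T T' W (g : T' -> W) (k : T -> T') (u : fsum S T) :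
  fev g (fmapT k u) = fev (fun t => g (k t)) u.
Proof. by rewrite /fev /fmapT big_map. Qed.
Lemma fev_gen T W (g : T -> W) t : fev g (fgen S t) = g t.
Proof. by rewrite /fgen fev_cons fev_nil addr0 scale1r. Qed.
Lemma fev_ext T W (g g' : T -> W) u : (forall t, g t = g' t) -> fev g u = fev g' u.
Proof. by move=> H; rewrite /fev; apply: eq_bigr => p _; rewrite H. Qed.
Lemma fev_lin T T' W (g : T' -> W) (k : T -> fsum S T') u :
  fev g (lin k u) = fev (fun t => fev g (k t)) u.
Proof.
elim: u => [|p u IH]; first by rewrite /lin /= !fev_nil.
by rewrite /lin /= fev_cat -/(lin k u) IH fev_scale fev_cons.
Qed.
Lemma fev_lincomb T W (g1 g2 : T -> W) s u :
  fev (fun t => s *: g1 t + g2 t) u = s *: fev g1 u + fev g2 u.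
Proof.
elim: u => [|p u IH]; first by rewrite !fev_nil scaler0 addr0.
rewrite !fev_cons IH scalerDr !scalerDr !scalerA mulrC.
by rewrite -!addrA; congr (_ + _); rewrite addrCA.
Qed.
Lemma fev0 T W u : fev (fun _ : T => (0 : W)) u = 0.
Proof. by elim: u => [|p u IH]; rewrite ?fev_nil // fev_cons IH scaler0 addr0. Qed.
Lemma fev_fprod T M W (g : T -> W) (mul : M -> T -> T -> T) m u v :
  fev g (Defs.fprod mul m u v) = fev (fun a => fev (fun b => g (mul m a b)) v) u.
Proof.
elim: u => [|p u IH]; first by rewrite /Defs.fprod /= !fev_nil.
rewrite /Defs.fprod /= fev_cat -/(Defs.fprod mul m u v) IH fev_cons; congr (_ + _).
elim: v {IH} => [|q v IHv] /=; first by rewrite !fev_nil scaler0.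
by rewrite !fev_cons IHv scalerDr scalerA.
Qed.
Lemma fev_scalef T W (g : T -> W) s u : s *: fev g u = fev (fun b => s *: g b) u.
Proof.
elim: u => [|q v IHv]; first by rewrite !fev_nil scaler0.
by rewrite !fev_cons scalerDr IHv !scalerA mulrC.
Qed.
Lemma fev_swap T T' W (F : T -> T' -> W) u v :
  fev (fun a => fev (fun b => F a b) v) u = fev (fun b => fev (fun a => F a b) u) v.
Proof.
elim: u => [|p u IH].
  by rewrite fev_nil; under [RHS]fev_ext do rewrite fev_nil; rewrite fev0.
rewrite fev_cons IH; under [RHS]fev_ext do rewrite fev_cons.
rewrite fev_scalef.
by rewrite -[in LHS](scale1r (fev _ v)) -fev_lincomb; apply: fev_ext => b; rewrite scale1r.
Qed.
End Fev.

Section Gen.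
Variables (S : comPzRingType) (T : Type) (C : forall W : lmodType S, (T -> W) -> Prop)
  (E : fsum S T -> fsum S T -> Prop)
  (HE : forall u v, E u v <-> (forall (W : lmodType S) (f : T -> W), C f -> fev f u = fev f v)).

Lemma Eev u v : E u v -> forall (W : lmodType S) (f : T -> W), C f -> fev f u = fev f v.
Proof. by move/HE. Qed.
Lemma E_of u v : (forall (W : lmodType S) (f : T -> W), C f -> fev f u = fev f v) -> E u v.
Proof. by move/HE. Qed.
Lemma E_refl u : E u u.
Proof. by apply: E_of. Qed.
Lemma E_sym u v : E u v -> E v u.
Proof. by move=> H; apply: E_of => W f Cf; rewrite (Eev H). Qed.
Lemma E_trans u v w : E u v -> E v w -> E u w.
Proof. by move=> H1 H2; apply: E_of => W f Cf; rewrite (Eev H1) // (Eev H2). Qed.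

Lemma lin_nil phi : is_lin E phi -> E (phi [::]) [::].
Proof.
move=> [_ Hlin]; have H0 := Hlin 1 [::] [::].
apply: E_of => W f Cf; have := Eev H0 Cf.
rewrite /fadd /= fev_cat fev_scale scale1r fev_nil => e.
by have := congr1 (fun y => y - fev f (phi [::])) e; rewrite addrK subrr.
Qed.

Lemma lin_exp phi : is_lin E phi -> forall u, E (phi u) (lin (fun t => phi (fgen S t)) u).
Proof.
move=> Hphi; elim => [|p u IH]; first exact: lin_nil.
case: Hphi => Hresp Hlin.
have e1 : E (p :: u) (fadd (fscale p.1 (fgen S p.2)) u).
  by apply: E_of => W f Cf; rewrite fev_cat fev_scale fev_gen fev_cons.
apply: E_trans (Hresp _ _ e1) _; apply: E_trans (Hlin _ _ _) _.
apply: E_of => W f Cf; rewrite /lin /= -/(lin _ u) !fev_cat (Eev IH) //.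
Qed.

Lemma meq_of_gen phi phi' : is_lin E phi -> is_lin E phi' ->
  (forall t, E (phi (fgen S t)) (phi' (fgen S t))) -> meq E phi phi'.
Proof.
move=> H1 H2 Hg u; apply: E_trans (lin_exp H1 u) _; apply: E_sym; apply: E_trans (lin_exp H2 u) _.
apply: E_of => W f Cf; rewrite !fev_lin; apply: fev_ext => t; by rewrite (Eev (Hg t)).
Qed.

Lemma lin_pw T0 (k k' : T0 -> fsum S T) u : (forall t, E (k t) (k' t)) -> E (lin k u) (lin k' u).
Proof. by move=> H; apply: E_of => W f Cf; rewrite !fev_lin; apply: fev_ext => t; rewrite (Eev (H t)). Qed.

Lemma is_lin_comp phi psi : is_lin E phi -> is_lin E psi -> is_lin E (phi \o psi).
Proof.
move=> [r1 l1] [r2 l2]; split => [u v H|s u v] /=; first by apply: r1; apply: r2.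
by apply: E_trans (r1 _ _ (l2 s u v)) (l1 _ _ _).
Qed.

Lemma is_Mhom_comp M (mulT : M -> T -> T -> T) phi psi : is_lin E phi ->
  (forall m u u' v v', E u u' -> E v v' -> E (Defs.fprod mulT m u v) (Defs.fprod mulT m u' v')) ->
  is_Mhom E mulT phi -> is_Mhom E mulT psi -> is_Mhom E mulT (phi \o psi).
Proof.
move=> [r1 _] Hp H1 H2 m u v /=; apply: E_trans (r1 _ _ (H2 m u v)) (H1 _ _ _).
Qed.

Lemma fprod_resp M (mulT : M -> T -> T -> T)
  (C1 : forall (W : lmodType S) (f : T -> W) m a, C f -> C (fun b => f (mulT m a b)))
  (C2 : forall (W : lmodType S) (f : T -> W) m v, C f -> C (fun a => fev (fun b => f (mulT m a b)) v)) :
  forall m u u' v v', E u u' -> E v v' -> E (Defs.fprod mulT m u v) (Defs.fprod mulT m u' v').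
Proof.
move=> m u u' v v' Hu Hv; apply: E_of => W f Cf; rewrite !fev_fprod.
rewrite (Eev Hu (C2 _ _ _ _ Cf)); apply: fev_ext => a; exact: (Eev Hv (C1 _ _ _ _ Cf)).
Qed.
End Gen.

Definition Ctrue (S : comPzRingType) (T : Type) : forall W : lmodType S, (T -> W) -> Prop :=
  fun _ _ => True.
Lemma feqHE (S : comPzRingType) (T : Type) (u v : fsum S T) :
  feq u v <-> (forall (W : lmodType S) (f : T -> W), Ctrue f -> fev f u = fev f v).
Proof. by split => H W f; [move=> _|]; apply: H. Qed.
Arguments feqHE {S T}.

Lemma choice_fun (A B : Type) (P : A -> B -> Prop) :
  (forall a, exists b, P a b) -> exists f : A -> B, forall a, P a (f a).
Proof.
move=> H; exists (fun a => proj1_sig (IndefiniteDescription.constructive_indefinite_description _ (H a))).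
by move=> a; case: (IndefiniteDescription.constructive_indefinite_description _ (H a)).
Qed.

Section FeqLemmas.
Variable S : comPzRingType.

Lemma lin_islin T (k : T -> fsum S T) : is_lin (@feq S T) (lin k).
Proof.
split => [u v H W g|s u v W g]; first by rewrite !fev_lin; apply: H.
by rewrite !(fev_lin, fev_cat, fev_scale).
Qed.

Lemma id_islin T : is_lin (@feq S T) id.
Proof. by split => [u v H|s u v W g]. Qed.

Lemma lin_Mhom T T' M M' (K : T -> fsum S T') (mul : M -> T -> T -> T) (mul' : M' -> T' -> T' -> T') m m' :
  (forall a b, feq (K (mul m a b)) (Defs.fprod mul' m' (K a) (K b))) ->
  forall u v, feq (lin K (Defs.fprod mul m u v)) (Defs.fprod mul' m' (lin K u) (lin K v)).
Proof.
move=> HK u v W g; rewrite [LHS]fev_lin [LHS]fev_fprod [RHS]fev_fprod [RHS]fev_lin.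
apply: fev_ext => a.
under [RHS]fev_ext => a' do rewrite fev_lin.
rewrite [RHS]fev_swap; apply: fev_ext => b.
by rewrite (HK a b) fev_fprod.
Qed.

Lemma fmap_resp T T' (k : T -> T') (u v : fsum S T) : feq u v -> feq (fmapT k u) (fmapT k v).
Proof. by move=> H W g; rewrite !fev_map; apply: H. Qed.

Lemma fprod_feq T M (mul : M -> T -> T -> T) m (u u' v v' : fsum S T) :
  feq u u' -> feq v v' -> feq (Defs.fprod mul m u v) (Defs.fprod mul m u' v').
Proof. exact: (fprod_resp feqHE). Qed.

Lemma fprod_gen T M (mul : M -> T -> T -> T) m a b :
  feq (fgen S (mul m a b)) (Defs.fprod mul m (fgen S a) (fgen S b)).
Proof. by move=> W g; rewrite fev_fprod !fev_gen. Qed.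

Lemma lin_gen T T' (K : T -> fsum S T') t : feq (lin K (fgen S t)) (K t).
Proof. by move=> W g; rewrite fev_lin fev_gen. Qed.

Lemma lin_comp T T' T'' (K : T' -> fsum S T'') (K' : T -> fsum S T') (u : fsum S T) :
  feq (lin K (lin K' u)) (lin (fun t => lin K (K' t)) u).
Proof. by move=> W g; rewrite !fev_lin; apply: fev_ext => t; rewrite fev_lin. Qed.

Lemma lin_fmap T T' T'' (K : T' -> fsum S T'') (k : T -> T') (u : fsum S T) :
  feq (lin K (fmapT k u)) (lin (fun t => K (k t)) u).
Proof. by move=> W g; rewrite !fev_lin fev_map. Qed.

Lemma fmap_lin T T' T'' (K : T -> fsum S T') (k : T' -> T'') (u : fsum S T) :
  feq (fmapT k (lin K u)) (lin (fun t => fmapT k (K t)) u).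
Proof. by move=> W g; rewrite fev_map !fev_lin; apply: fev_ext => t; rewrite fev_map. Qed.

Lemma lin_fgen T (u : fsum S T) : feq (lin (fun t : T => fgen S t) u) u.
Proof.
move=> W g; rewrite fev_lin; under fev_ext do rewrite fev_gen; done.
Qed.
End FeqLemmas.

Lemma feq_refl (S : comPzRingType) T (u : fsum S T) : feq u u.
Proof. by []. Qed.
Lemma feq_sym (S : comPzRingType) T (u v : fsum S T) : feq u v -> feq v u.
Proof. by move=> H W g; rewrite H. Qed.
Lemma feq_trans (S : comPzRingType) T (u v w : fsum S T) : feq u v -> feq v w -> feq u w.
Proof. by move=> H1 H2 W g; rewrite H1 H2. Qed.

Section Push.
Variables (S : comPzRingType) (T X : Type) (C : forall W : lmodType S, (T -> W) -> Prop)
  (E : fsum S T -> fsum S T -> Prop)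
  (HE : forall u v, E u v <-> (forall (W : lmodType S) (f : T -> W), C f -> fev f u = fev f v))
  (k : X -> T).

Lemma push theta (v : X -> fsum S X) : is_lin E theta ->
  (forall y, E (theta (fgen S (k y))) (fmapT k (v y))) ->
  forall u, E (theta (fmapT k u)) (fmapT k (lin v u)).
Proof.
move=> Hth Hv u; apply: (E_trans HE (lin_exp HE Hth (fmapT k u))).
apply: (E_of HE) => W f Cf; rewrite fev_lin fev_map fev_map fev_lin.
by apply: fev_ext => y; rewrite (Eev HE (Hv y) Cf) fev_map.
Qed.

Lemma inverse_lemma theta theta' (v w : X -> fsum S X) :
  (forall u v, E (fmapT k u) (fmapT k v) -> feq u v) ->
  is_lin E theta -> is_lin E theta' -> meq E (theta \o theta') id ->
  (forall y, E (theta (fgen S (k y))) (fmapT k (v y))) ->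
  (forall y, E (theta' (fgen S (k y))) (fmapT k (w y))) ->
  meq (@feq S X) (lin v \o lin w) id.
Proof.
move=> Hinj H1 H2 Hid Hv Hw.
apply: (meq_of_gen feqHE (is_lin_comp feqHE (lin_islin v) (lin_islin w)) (id_islin _ _)) => x /=.
apply: feq_trans ((lin_islin v).1 _ _ (lin_gen w x)) _.
apply: Hinj; apply: (E_trans HE (E_sym HE (push H1 Hv (w x)))).
apply: (E_trans HE (H1.1 _ _ (E_sym HE (Hw x)))).
exact: (Hid (fgen S (k x))).
Qed.
End Push.

Section Trees.
Variables (X M : Type) (S : comPzRingType).
Local Notation NodeM := (fun (m : M) (a b : magma X M) => Node a m b).
Local Notation mag := (magma X M).

Fixpoint tr (g : X -> fsum S mag) (t : mag) : fsum S mag :=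
  match t with
  | Leaf x => g x
  | Node a m b => Defs.fprod NodeM m (tr g a) (tr g b)
  end.

Definition gPhi (phi : fsum S X -> fsum S X) (x : X) : fsum S mag := fmapT Leaf (phi (fgen S x)).
Definition Phi0 (phi : fsum S X -> fsum S X) := lin (tr (gPhi phi)).

Lemma Leaf_inj (u v : fsum S X) : feq (fmapT (@Leaf X M) u) (fmapT Leaf v) -> feq u v.
Proof.
move=> H W g; have := H W (fun t => match t with Leaf x => g x | _ => 0 end).
by rewrite !fev_map.
Qed.

Lemma tr_Mhom g : is_Mhom (@feq S mag) NodeM (lin (tr g)).
Proof. by move=> m u v; apply: lin_Mhom. Qed.

Lemma fprodN_feq m (u u' v v' : fsum S mag) :
  feq u u' -> feq v v' -> feq (Defs.fprod NodeM m u v) (Defs.fprod NodeM m u' v').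
Proof. exact: fprod_feq. Qed.

Lemma tr_pw g g' : (forall x, feq (g x) (g' x)) -> forall t, feq (tr g t) (tr g' t).
Proof. by move=> H; elim => [x|a IHa m b IHb] //=; apply: fprodN_feq. Qed.

Lemma Mhom_unique psi psi' : is_lin (@feq S mag) psi -> is_lin (@feq S mag) psi' ->
  is_Mhom (@feq S mag) NodeM psi -> is_Mhom (@feq S mag) NodeM psi' ->
  (forall x, feq (psi (fgen S (Leaf x))) (psi' (fgen S (Leaf x)))) -> meq (@feq S mag) psi psi'.
Proof.
move=> H1 H2 M1 M2 HL; apply: (meq_of_gen feqHE H1 H2); elim => [x|a IHa m b IHb]; first exact: HL.
have e : feq (fgen S (Node a m b)) (Defs.fprod NodeM m (fgen S a) (fgen S b)) by apply: fprod_gen.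
apply: feq_trans (H1.1 _ _ e) _; apply: feq_trans (M1 _ _ _) _.
apply: feq_trans (fprodN_feq m IHa IHb) _.
apply: feq_sym; apply: feq_trans (H2.1 _ _ e) _; exact: M2.
Qed.

Lemma Phi_leaf phi x : feq (Phi0 phi (fgen S (Leaf x))) (fmapT Leaf (phi (fgen S x))).
Proof. exact: lin_gen. Qed.

Lemma Phi_inF phi u : is_lin (@feq S X) phi -> inF_AX u -> inF_AX (Phi0 phi u).
Proof.
move=> Hphi [v Hv]; exists (phi v).
apply: feq_trans ((lin_islin _).1 _ _ Hv) _.
apply: feq_trans (lin_fmap _ _ _) _.
rewrite /=; apply: feq_trans (feq_sym (fmap_lin _ _ _)) _.
apply: fmap_resp; exact: feq_sym (lin_exp feqHE Hphi v).
Qed.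

Lemma Phi_meq phi phi' : meq (@feq S X) phi phi' -> meq (@feq S mag) (Phi0 phi) (Phi0 phi').
Proof.
move=> H u; rewrite /Phi0; apply: (lin_pw feqHE) => t; apply: tr_pw => x.
by apply: fmap_resp; apply: H.
Qed.

Lemma Phi_id : meq (@feq S mag) (Phi0 id) id.
Proof.
move=> u; apply: feq_trans (lin_fgen u); rewrite /Phi0; apply: (lin_pw feqHE).
elim => [x|a IHa m b IHb] //=.
by apply: feq_trans (fprodN_feq m IHa IHb) _; apply: feq_sym; apply: fprod_gen.
Qed.

Lemma Phi_comp phi phi' : is_lin (@feq S X) phi ->
  meq (@feq S mag) (Phi0 phi \o Phi0 phi') (Phi0 (phi \o phi')).
Proof.
move=> Hphi u /=; apply: feq_trans (lin_comp _ _ _) _; rewrite /Phi0; apply: (lin_pw feqHE).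
elim => [x|a IHa m b IHb] /=.
  apply: feq_trans (lin_fmap _ _ _) _; apply: feq_trans (feq_sym (fmap_lin _ _ _)) _.
  by apply: fmap_resp; apply: feq_sym; apply: (lin_exp feqHE Hphi).
apply: feq_trans (tr_Mhom _ _ _ _) _; exact: fprodN_feq.
Qed.

Lemma Phi_GL phi : GLF phi -> AutAX (Phi0 phi).
Proof.
move=> [Hphi [phi' [Hphi' [Hc1 Hc2]]]].
split; first exact: lin_islin.
split; first exact: tr_Mhom.
split; first by move=> u; apply: Phi_inF.
exists (Phi0 phi'); split; first exact: lin_islin.
split; first exact: tr_Mhom.
split; first by move=> u; apply: Phi_inF.
split => u.
  apply: feq_trans (Phi_comp _ Hphi u) _; apply: feq_trans (Phi_meq Hc1 u) _; exact: Phi_id.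
apply: feq_trans (Phi_comp _ Hphi' u) _; apply: feq_trans (Phi_meq Hc2 u) _; exact: Phi_id.
Qed.
End Trees.

Section Mapc.
Variables (S S' : comPzRingType) (h : {rmorphism S -> S'}).

Lemma fev_hmod T (W : lmodType S') (f : T -> W) (u : fsum S T) :
  @fev S T (hmod h W) f u = fev f (mapc h u).
Proof.
elim: u => [|p u IH]; first by rewrite /mapc /= !fev_nil.
by rewrite fev_cons IH /mapc /= fev_cons.
Qed.

Lemma feq_mapc T (u v : fsum S T) : feq u v -> feq (mapc h u) (mapc h v).
Proof. by move=> H W f; rewrite -!fev_hmod; apply: (H (hmod h W) f). Qed.

Lemma teq_mapc (R : comPzRingType) (iS : {rmorphism R -> S}) (iS' : {rmorphism R -> S'})
  (B : lmodType R) (u v : fsum S B) :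
  Ralg_hom iS iS' h -> teq iS u v -> teq iS' (mapc h u) (mapc h v).
Proof.
move=> Hh H W f Hf; rewrite -!fev_hmod; apply: (H (hmod h W) f) => r a b.
by rewrite Hf -Hh.
Qed.

Lemma mapc_fprod T M (mul : M -> T -> T -> T) m (u v : fsum S T) :
  mapc h (Defs.fprod mul m u v) = Defs.fprod mul m (mapc h u) (mapc h v).
Proof.
elim: u => [|p u IH] //=; rewrite /Defs.fprod /= -/(Defs.fprod mul m u v) /mapc map_cat.
rewrite -/(mapc h (Defs.fprod mul m u v)) IH -map_comp; congr (_ ++ _).
rewrite -map_comp; by apply: eq_map => q /=; rewrite rmorphM.
Qed.

Lemma mapc_fmap T T' (k : T -> T') (u : fsum S T) : mapc h (fmapT k u) = fmapT k (mapc h u).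
Proof. by rewrite /mapc /fmapT -!map_comp. Qed.

Lemma bc_lin T (phi : fsum S T -> fsum S T) :
  bc h phi = lin (fun t => mapc h (phi (fgen S t))).
Proof. by []. Qed.

Lemma bc_gen T (phi : fsum S T -> fsum S T) t (W : lmodType S') (f : T -> W) :
  fev f (bc h phi (fgen S' t)) = fev f (mapc h (phi (fgen S t))).
Proof. by rewrite bc_lin fev_lin fev_gen. Qed.
End Mapc.

Section Natural.
Variables (X M : Type).
Local Notation NodeM := (fun (m : M) (a b : magma X M) => Node a m b).

Lemma Phi_nat (S S' : comPzRingType) (h : {rmorphism S -> S'}) (phi : fsum S X -> fsum S X) :
  meq (@feq S' _) (@Phi0 X M S' (bc h phi)) (bc h (@Phi0 X M S phi)).
Proof.
move=> u; rewrite [X in feq _ (X _)]bc_lin /Phi0; apply: (lin_pw feqHE) => t.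
have e : forall (W : lmodType S') (f : magma X M -> W), fev f (mapc h (lin (tr (@gPhi X M S phi)) (fgen S t))) = fev f (mapc h (tr (@gPhi X M S phi) t)).
  by move=> W f; rewrite -!fev_hmod fev_lin fev_gen.
apply: feq_trans (feq_sym e).
elim: t {e} => [x|a IHa m b IHb] /=.
  rewrite /gPhi mapc_fmap; apply: fmap_resp => W f; exact: bc_gen.
by rewrite mapc_fprod; apply: fprodN_feq.
Qed.
End Natural.

Lemma inF_gen X M (S : comPzRingType) (x : X) : @inF_AX X M S (fgen S (Leaf x)).
Proof. by exists (fgen S x). Qed.

Lemma part1 (R : comPzRingType) (M : Type) (X : Type) :
  (exists Phi : forall (S : comPzRingType), {rmorphism R -> S} ->
        (fsum S X -> fsum S X) -> (fsum S (magma X M) -> fsum S (magma X M)),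
     (forall (S : comPzRingType) (iS : {rmorphism R -> S}) phi, GLF phi -> AutAX (Phi S iS phi)) /\
     (forall (S : comPzRingType) (iS : {rmorphism R -> S}) phi phi', GLF phi -> GLF phi' ->
        meq (@feq S X) phi phi' -> meq (@feq S _) (Phi S iS phi) (Phi S iS phi')) /\
     (forall (S : comPzRingType) (iS : {rmorphism R -> S}) phi phi', GLF phi -> GLF phi' ->
        meq (@feq S _) (Phi S iS (phi \o phi')) (Phi S iS phi \o Phi S iS phi')) /\
     (forall (S : comPzRingType) (iS : {rmorphism R -> S}) phi phi', GLF phi -> GLF phi' ->
        meq (@feq S _) (Phi S iS phi) (Phi S iS phi') -> meq (@feq S X) phi phi') /\
     (forall (S : comPzRingType) (iS : {rmorphism R -> S}) psi, AutAX psi ->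
        exists phi, GLF phi /\ meq (@feq S _) (Phi S iS phi) psi) /\
     (forall (S S' : comPzRingType) (iS : {rmorphism R -> S}) (iS' : {rmorphism R -> S'})
          (h : {rmorphism S -> S'}) (phi : fsum S X -> fsum S X),
        Ralg_hom iS iS' h -> GLF phi ->
        meq (@feq S' _) (Phi S' iS' (bc h phi)) (bc h (Phi S iS phi)))).
Proof.
exists (fun S iS phi => @Phi0 X M S phi).
split; first by move=> S iS phi H; apply: Phi_GL.
split; first by move=> S iS phi phi' _ _ H; apply: Phi_meq.
split; first by move=> S iS phi phi' [H _] _ u; apply: feq_sym; apply: Phi_comp.
split.
  move=> S iS phi phi' [H1 _] [H2 _] H; apply: (meq_of_gen feqHE H1 H2) => x.
  apply: (@Leaf_inj X M); apply: feq_trans (feq_sym (Phi_leaf _ x)) _.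
  exact: feq_trans (H _) (Phi_leaf _ x).
split.
  move=> S iS psi [Hl [Hm [Hf [psi' [Hl' [Hm' [Hf' [Hc1 Hc2]]]]]]]].
  have [v Hv] := choice_fun (fun x : X => Hf (fgen S (Leaf x)) (inF_gen M S x)).
  have [w Hw] := choice_fun (fun x : X => Hf' (fgen S (Leaf x)) (inF_gen M S x)).
  exists (lin v); split.
    split; first exact: lin_islin.
    exists (lin w); split; first exact: lin_islin.
    split; first exact: (inverse_lemma feqHE (@Leaf_inj X M S) Hl Hl' Hc1 Hv Hw).
    exact: (inverse_lemma feqHE (@Leaf_inj X M S) Hl' Hl Hc2 Hw Hv).
  apply: Mhom_unique => //; [exact: lin_islin| exact: tr_Mhom|] => x.
  apply: feq_trans (Phi_leaf _ x) _; apply: feq_trans (fmap_resp _ (lin_gen v x)) _.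
  exact: feq_sym.
by move=> S S' iS iS' h phi _ _; apply: Phi_nat.
Qed.

Definition Csl (R S : comPzRingType) (iS : {rmorphism R -> S}) (B : lmodType R) :
  forall W : lmodType S, (B -> W) -> Prop :=
  fun W f => forall (r : R) (a b : B), f (r *: a + b) = iS r *: f a + f b.

Lemma teqHE (S R : comPzRingType) (iS : {rmorphism R -> S}) (B : lmodType R) (u v : fsum S B) :
  teq iS u v <-> (forall (W : lmodType S) (f : B -> W), Csl iS f -> fev f u = fev f v).
Proof. by []. Qed.
Arguments teqHE {S R iS B}.

Section Part2.
Variables (R : comPzRingType) (B : lmodType R) (M X : Type) (mul : M -> B -> B -> B) (iF : X -> B).
Hypothesis Hbil : bilinear_prods mul.
Local Notation NodeM := (fun (m : M) (a b : magma X M) => Node a m b).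

Section S.
Variables (S : comPzRingType) (iS : {rmorphism R -> S}).
Local Notation teqS := (@teq S R iS B).

Lemma teq_trans u v w : teqS u v -> teqS v w -> teqS u w.
Proof. exact: (E_trans teqHE). Qed.
Lemma teq_sym u v : teqS u v -> teqS v u.
Proof. exact: (E_sym teqHE). Qed.
Lemma feq_teq (u v : fsum S B) : feq u v -> teqS u v.
Proof. by move=> H W f _; apply: H. Qed.
Lemma fmap_teq (u v : fsum S X) : feq u v -> teqS (fmapT iF u) (fmapT iF v).
Proof. by move=> H W f _; rewrite !fev_map; apply: H. Qed.

Lemma fprod_teq m (u u' v v' : fsum S B) :
  teqS u u' -> teqS v v' -> teqS (Defs.fprod mul m u v) (Defs.fprod mul m u' v').
Proof.
apply: (fprod_resp teqHE).
  by move=> W f m' a Hf r b c; rewrite /= (Hbil m' r b c a).2 Hf.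
move=> W f m' v0 Hf r a a' /=; rewrite -fev_lincomb; apply: fev_ext => b.
by rewrite (Hbil m' r a a' b).1 Hf.
Qed.

Lemma teq_gen0 : teqS (fgen S 0) [::].
Proof.
move=> W f Hf; rewrite fev_gen fev_nil.
have := Hf (-1) 0 0; rewrite scaler0 addr0 rmorphN1 scaleN1r addNr //.
Qed.

Lemma teq_genD r a b : teqS (fgen S (r *: a + b)) (fadd (fscale (iS r) (fgen S a)) (fgen S b)).
Proof. by move=> W f Hf; rewrite fev_cat fev_scale !fev_gen Hf. Qed.

Lemma teq_fadd_fscale s (u u' v v' : fsum S B) :
  teqS u u' -> teqS v v' -> teqS (fadd (fscale s u) v) (fadd (fscale s u') v').
Proof. by move=> H1 H2 W f Hf; rewrite !fev_cat !fev_scale (H1 W f Hf) (H2 W f Hf). Qed.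
End S.
End Part2.

Lemma part2 (R : comPzRingType) (M : Type) (X : Type) :
  (forall (B : lmodType R) (mul : M -> B -> B -> B) (iF : X -> B),
     bilinear_prods mul ->
     generates mul iF ->
     (forall (S : comPzRingType) (iS : {rmorphism R -> S}) (u v : fsum S X),
        teq iS (fmapT iF u) (fmapT iF v) -> feq u v) ->
     (forall (S : comPzRingType) (iS : {rmorphism R -> S}) theta, AutB mul iF iS theta ->
        exists psi, @ext_rel R B X M iF S iS theta psi /\ AutAX psi) /\
     (forall (S : comPzRingType) (iS : {rmorphism R -> S}) theta psi psi', AutB mul iF iS theta ->
        @ext_rel R B X M iF S iS theta psi -> @ext_rel R B X M iF S iS theta psi' ->
        meq (@feq S _) psi psi') /\
     (forall (S : comPzRingType) (iS : {rmorphism R -> S}) theta1 theta2 psi1 psi2,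
        AutB mul iF iS theta1 -> AutB mul iF iS theta2 ->
        @ext_rel R B X M iF S iS theta1 psi1 -> @ext_rel R B X M iF S iS theta2 psi2 ->
        @ext_rel R B X M iF S iS (theta1 \o theta2) (psi1 \o psi2)) /\
     (forall (S : comPzRingType) (iS : {rmorphism R -> S}) theta1 theta2 psi1 psi2,
        AutB mul iF iS theta1 -> AutB mul iF iS theta2 ->
        @ext_rel R B X M iF S iS theta1 psi1 -> @ext_rel R B X M iF S iS theta2 psi2 ->
        meq (@feq S _) psi1 psi2 -> meq (@teq S R iS B) theta1 theta2) /\
     (forall (S S' : comPzRingType) (iS : {rmorphism R -> S}) (iS' : {rmorphism R -> S'})
          (h : {rmorphism S -> S'}) theta psi,
        Ralg_hom iS iS' h -> AutB mul iF iS theta ->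
        @ext_rel R B X M iF S iS theta psi ->
        @ext_rel R B X M iF S' iS' (bc h theta) (bc h psi))).
Proof.
move=> B mul iF Hbil Hgen Hinj.
split.
  move=> S iS theta [Hl [Hm [Hf [theta' [Hl' [Hm' [Hf' [Hc1 Hc2]]]]]]]].
  have g0 : forall x, inF_B iF iS (fgen S (iF x)) by move=> x; exists (fgen S x).
  have [v Hv] := choice_fun (fun x : X => Hf _ (g0 x)).
  have [w Hw] := choice_fun (fun x : X => Hf' _ (g0 x)).
  exists (@Phi0 X M S (lin v)); split.
    split; first exact: lin_islin.
    split; first exact: tr_Mhom.
    move=> x; exists (v x); split => //.
    exact: feq_trans (Phi_leaf _ x) (fmap_resp _ (lin_gen v x)).
  apply: Phi_GL; split; first exact: lin_islin.
  exists (lin w); split; first exact: lin_islin.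
  split; first exact: (inverse_lemma teqHE (Hinj S iS) Hl Hl' Hc1 Hv Hw).
  exact: (inverse_lemma teqHE (Hinj S iS) Hl' Hl Hc2 Hw Hv).
split.
  move=> S iS theta psi psi' _ [Hl [Hm Hx]] [Hl' [Hm' Hx']].
  apply: Mhom_unique => // x.
  have [v [e1 e2]] := Hx x; have [v' [e1' e2']] := Hx' x.
  apply: feq_trans e1 _; apply: feq_trans _ (feq_sym e1'); apply: fmap_resp.
  apply: (Hinj S iS); exact: teq_trans (teq_sym e2) e2'.
split.
  move=> S iS theta1 theta2 psi1 psi2 [Ht1 _] _ [Hl1 [Hm1 Hx1]] [Hl2 [Hm2 Hx2]].
  split; first exact: (is_lin_comp feqHE).
  split; first by apply: (is_Mhom_comp feqHE) => //; apply: fprod_feq.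
  have [v1 Hv1] := choice_fun Hx1.
  move=> x; have [v2 [e1 e2]] := Hx2 x.
  exists (lin v1 v2); split => /=.
    apply: feq_trans (Hl1.1 _ _ e1) _.
    exact: (push feqHE Hl1 (fun y => (Hv1 y).1) v2).
  apply: teq_trans (Ht1.1 _ _ e2) _.
  exact: (push teqHE Ht1 (fun y => (Hv1 y).2) v2).
split.
  move=> S iS theta1 theta2 psi1 psi2 [Ht1 [Hm1 _]] [Ht2 [Hm2 _]] [_ [_ Hx1]] [_ [_ Hx2]] Hpsi.
  apply: (meq_of_gen teqHE Ht1 Ht2).
  apply: Hgen.
  - move=> x; have [v1 [e1 f1]] := Hx1 x; have [v2 [e2 f2]] := Hx2 x.
    apply: teq_trans f1 _; apply: teq_trans _ (teq_sym f2); apply: fmap_teq.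
    apply: (@Leaf_inj X M); apply: feq_trans (feq_sym e1) _; apply: feq_trans (Hpsi _) e2.
  - apply: teq_trans (Ht1.1 _ _ (@teq_gen0 R B S iS)) _; apply: teq_trans (lin_nil teqHE Ht1) _.
    apply: teq_sym; apply: teq_trans (Ht2.1 _ _ (@teq_gen0 R B S iS)) _; exact: (lin_nil teqHE Ht2).
  - move=> r a b IHa IHb.
    apply: teq_trans (Ht1.1 _ _ (@teq_genD R B S iS r a b)) _; apply: teq_trans (Ht1.2 _ _ _) _.
    apply: teq_trans (teq_fadd_fscale _ IHa IHb) _.
    apply: teq_sym; apply: teq_trans (Ht2.1 _ _ (@teq_genD R B S iS r a b)) _; exact: (Ht2.2 _ _ _).
  - move=> m a b IHa IHb.
    have e : teq iS _ _ := feq_teq (fprod_gen mul m a b).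
    apply: teq_trans (Ht1.1 _ _ e) _; apply: teq_trans (Hm1 _ _ _) _.
    apply: teq_trans (fprod_teq Hbil _ IHa IHb) _.
    apply: teq_sym; apply: teq_trans (Ht2.1 _ _ e) _; exact: Hm2.
move=> S S' iS iS' h theta psi Hh _ [Hl [Hm Hx]].
split; first by rewrite bc_lin; exact: lin_islin.
split.
  rewrite bc_lin => m u v; apply: lin_Mhom => a b.
  rewrite -mapc_fprod; apply: feq_mapc.
  apply: feq_trans (Hl.1 _ _ (fprod_gen (fun (m0 : M) (a0 b0 : magma X M) => Node a0 m0 b0) m a b)) _; exact: Hm.
move=> x; have [v [e1 e2]] := Hx x; exists (mapc h v); split.
  apply: feq_trans (fun W f => bc_gen h psi (Leaf x) f) _.
  by rewrite -mapc_fmap; apply: feq_mapc.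
apply: teq_trans (fun W f _ => bc_gen h theta (iF x) f) _.
by rewrite -mapc_fmap; apply: teq_mapc.
Qed.

Unset Implicit Arguments.
Theorem lemma4 (R : comPzRingType) (M : Type) (Mne : inhabited M) (X : Type) :
  (* (i) natural isomorphism of R-group functors GL_R(F) ~ Aut(A(X), F) *)
  (exists Phi : forall (S : comPzRingType), {rmorphism R -> S} ->
        (fsum S X -> fsum S X) -> (fsum S (magma X M) -> fsum S (magma X M)),
     (forall (S : comPzRingType) (iS : {rmorphism R -> S}) phi, GLF phi -> AutAX (Phi S iS phi)) /\
     (forall (S : comPzRingType) (iS : {rmorphism R -> S}) phi phi', GLF phi -> GLF phi' ->
        meq (@feq S X) phi phi' -> meq (@feq S _) (Phi S iS phi) (Phi S iS phi')) /\
     (forall (S : comPzRingType) (iS : {rmorphism R -> S}) phi phi', GLF phi -> GLF phi' ->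
        meq (@feq S _) (Phi S iS (phi \o phi')) (Phi S iS phi \o Phi S iS phi')) /\
     (forall (S : comPzRingType) (iS : {rmorphism R -> S}) phi phi', GLF phi -> GLF phi' ->
        meq (@feq S _) (Phi S iS phi) (Phi S iS phi') -> meq (@feq S X) phi phi') /\
     (forall (S : comPzRingType) (iS : {rmorphism R -> S}) psi, AutAX psi ->
        exists phi, GLF phi /\ meq (@feq S _) (Phi S iS phi) psi) /\
     (forall (S S' : comPzRingType) (iS : {rmorphism R -> S}) (iS' : {rmorphism R -> S'})
          (h : {rmorphism S -> S'}) (phi : fsum S X -> fsum S X),
        Ralg_hom iS iS' h -> GLF phi ->
        meq (@feq S' _) (Phi S' iS' (bc h phi)) (bc h (Phi S iS phi))))
  /\
  (* (ii) *)
  (forall (B : lmodType R) (mul : M -> B -> B -> B) (iF : X -> B),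
     bilinear_prods mul ->
     generates mul iF ->
     (forall (S : comPzRingType) (iS : {rmorphism R -> S}) (u v : fsum S X),
        teq iS (fmapT iF u) (fmapT iF v) -> feq u v) ->
     (forall (S : comPzRingType) (iS : {rmorphism R -> S}) theta, AutB mul iF iS theta ->
        exists psi, @ext_rel R B X M iF S iS theta psi /\ AutAX psi) /\
     (forall (S : comPzRingType) (iS : {rmorphism R -> S}) theta psi psi', AutB mul iF iS theta ->
        @ext_rel R B X M iF S iS theta psi -> @ext_rel R B X M iF S iS theta psi' ->
        meq (@feq S _) psi psi') /\
     (forall (S : comPzRingType) (iS : {rmorphism R -> S}) theta1 theta2 psi1 psi2,
        AutB mul iF iS theta1 -> AutB mul iF iS theta2 ->
        @ext_rel R B X M iF S iS theta1 psi1 -> @ext_rel R B X M iF S iS theta2 psi2 ->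
        @ext_rel R B X M iF S iS (theta1 \o theta2) (psi1 \o psi2)) /\
     (forall (S : comPzRingType) (iS : {rmorphism R -> S}) theta1 theta2 psi1 psi2,
        AutB mul iF iS theta1 -> AutB mul iF iS theta2 ->
        @ext_rel R B X M iF S iS theta1 psi1 -> @ext_rel R B X M iF S iS theta2 psi2 ->
        meq (@feq S _) psi1 psi2 -> meq (@teq S R iS B) theta1 theta2) /\
     (forall (S S' : comPzRingType) (iS : {rmorphism R -> S}) (iS' : {rmorphism R -> S'})
          (h : {rmorphism S -> S'}) theta psi,
        Ralg_hom iS iS' h -> AutB mul iF iS theta ->
        @ext_rel R B X M iF S iS theta psi ->
        @ext_rel R B X M iF S' iS' (bc h theta) (bc h psi))).

Proof. split; [exact: part1 | exact: part2]. Qed.
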